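(* Let $F$ be a field of characteristic different from $2$, let $a_1,a_2\in F^\times$ be such that $E=F(\sqrt{a_1},\sqrt{a_2})$ is Galois over $F$ with Galois group isomorphic to $\mathbb Z/2\mathbb Z\times\mathbb Z/2\mathbb Z$, and let $E_1=F(\sqrt{a_1})$, $E_2=F(\sqrt{a_2})$, $E_3=F(\sqrt{a_1a_2})$. Then \[N_{E/E_3}(E^\times)\cap F^\times=N_{E_1/F}(E_1^\times)\cdot N_{E_2/F}(E_2^\times).\]
   Context: For a quadratic extension $L/K$ with nontrivial automorphism $\tau$, $N_{L/K}(x)=x\,\tau(x)$ for $x\in L^\times$. For subsets $A,B$ of a multiplicative group, $A\cdot B=\{ab:a\in A,b\in B\}$. *)

(* Defs.v *)
From mathcomp Require Import all_boot all_order all_algebra all_fingroup all_solvable all_field.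

(* Main.v *)
Require Import Defs.
Set Warnings "-notation-overridden -ambiguous-paths".
From mathcomp Require Import all_boot all_order all_algebra all_fingroup all_solvable all_field.
From mathcomp Require Import ring.
Import GRing.Theory.
Local Open Scope ring_scope.
Section S.
Variables (F : fieldType) (L : splittingFieldType F).

Lemma aend_fix1 (f : 'AEnd(L)) s : s \in 1%VS -> f s = s.
Proof. by move=> /vlineP[k ->]; rewrite linearZ /= rmorph1. Qed.

Lemma aend_coord (f : 'AEnd(L)) s t r : s \in 1%VS -> t \in 1%VS ->
  f (s + t * r) = s + t * f r.
Proof. move=> hs ht; rewrite linearD /= (aend_fix1 f _ hs) rmorphM /=. by rewrite (aend_fix1 f _ ht). Qed.

Lemma gal_all (E : {subfield L}) (x : gal_of E) : (x \in 'Gal(E / 1%VS))%g.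
Proof. by rewrite gal_kHom ?sub1v // k1HomE ahomWin. Qed.

Lemma card4 : #|[set: 'Z_2 * 'Z_2]| = 4%N.
Proof. by rewrite cardsT card_prod card_ord. Qed.

Lemma coord (K : {subfield L}) (r c : L) v : c \in K -> r ^+ 2 = c ->
  v \in <<K; r>>%VS -> exists s t, [/\ s \in K, t \in K & v = s + t * r].
Proof.
move=> Kc rc Kv.
have hdeg : (adjoin_degree K r <= 2)%N.
  have hp : ('X^2 - c%:P) \is a polyOver K.
    by rewrite rpredB ?rpredX ?polyOverX ?polyOverC.
  have hroot : root ('X^2 - c%:P) r by rewrite rootE !hornerE rc subrr.
  have hnz : ('X^2 - c%:P : {poly L}) != 0.
    by rewrite -size_poly_eq0 size_XnsubC.
  have := dvdp_leq hnz (minPoly_dvdp hp hroot).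
  by rewrite size_minPoly size_XnsubC.
exists (Fadjoin_poly K r v)`_0, (Fadjoin_poly K r v)`_1.
have hO := Fadjoin_polyOver K r v.
split; try by apply: (polyOverP hO).
rewrite -{1}(Fadjoin_poly_eq Kv) (horner_coef_wide (n := 2)).
  by rewrite !big_ord_recr big_ord0 /= add0r expr0 expr1 mulr1.
exact: leq_trans (size_Fadjoin_poly K r v) hdeg.
Qed.

Variables (a1 a2 : F) (r1 r2 : L).
Hypotheses (two : (2%:R : L) != 0) (ha1 : a1 != 0) (ha2 : a2 != 0)
  (hr1 : r1 ^+ 2 = a1%:A) (hr2 : r2 ^+ 2 = a2%:A).

Local Notation E := (<<<<1; r1>>; r2>>%AS : {subfield L}).
Local Notation E1 := (<<1; r1>>%AS : {subfield L}).
Local Notation E2 := (<<1; r2>>%AS : {subfield L}).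
Local Notation E3 := (<<1; r1 * r2>>%AS : {subfield L}).

Lemma sq_nz (r : L) (a : F) : a != 0 -> r ^+ 2 = a%:A -> r != 0.
Proof.
move=> ha hr; apply: contraNneq ha => r0.
by move: hr; rewrite r0 expr0n /= => /esym/eqP; rewrite scaler_eq0 oner_eq0 orbF.
Qed.

Lemma neqN (r : L) : r != 0 -> r != - r.
Proof.
move=> r0; apply: contraNneq two => h.
have : (2%:R : L) * r = 0 by rewrite mulr_natl mulr2n {1}h addNr.
by move/eqP; rewrite mulf_eq0 (negPf r0) orbF.
Qed.

Lemma sign (f : 'AEnd(L)) (r : L) (a : F) : r ^+ 2 = a%:A -> f r = r \/ f r = - r.
Proof.
move=> hr; have : f r ^+ 2 == r ^+ 2.
  rewrite -rmorphXn /= hr (aend_fix1 f) //.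
  by rewrite rpredZ ?mem1v.
by rewrite eqf_sqr => /orP[] /eqP; [left|right].
Qed.

Lemma r1E : r1 \in E. Proof. by rewrite (subvP (subv_adjoin _ _)) ?memv_adjoin. Qed.
Lemma r2E : r2 \in E. Proof. exact: memv_adjoin. Qed.
Lemma E1E : (E1 <= E)%VS. Proof. exact: subv_adjoin. Qed.
Lemma E2E : (E2 <= E)%VS. Proof. by rewrite sub_adjoin1v r2E. Qed.
Lemma E3E : (E3 <= E)%VS. Proof. by rewrite sub_adjoin1v rpredM ?r1E ?r2E. Qed.

Lemma coord1 (r : L) (a : F) v : r ^+ 2 = a%:A -> v \in <<1; r>>%VS ->
  exists s t, [/\ s \in 1%VS, t \in 1%VS & v = s + t * r].
Proof.
move=> hr hv; apply: (@coord 1%AS r (a%:A)) => //.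
by rewrite rpredZ ?mem1v.
Qed.

Lemma eqE (x y : gal_of E) : x r1 = y r1 -> x r2 = y r2 -> x = y.
Proof.
move=> h1 h2; apply/eqP/gal_eqP => v Ev.
have [p [q [Ep Eq ->]]] : exists p q, [/\ p \in E1, q \in E1 & v = p + q * r2].
  apply: (@coord E1 r2 (a2%:A)) => //; by rewrite rpredZ ?mem1v.
have hE1 (u : L) : u \in E1 -> x u = y u.
  move=> /(coord1 _ _ _ hr1)[s [t [hs ht ->]]].
  by rewrite !aend_coord // h1.
by rewrite !rmorphD !rmorphM /= (hE1 p Ep) (hE1 q Eq) h2.
Qed.

Lemma same_sign (f g : 'AEnd(L)) (r : L) (a : F) : r ^+ 2 = a%:A -> r != 0 ->
  (f r == r) = (g r == r) -> f r = g r.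
Proof.
move=> hr r0 e.
have nr : (- r == r) = false by rewrite eq_sym; apply/negbTE/neqN.
case: (sign f _ _ hr) => hf; case: (sign g _ _ hr) => hg; rewrite hf hg //;
  by move: e; rewrite hf hg eqxx nr.
Qed.

Lemma exists_sign : #|('Gal(E / 1%AS))%g| = 4%N -> forall b1 b2 : bool,
  exists x : gal_of E, x r1 = (if b1 then r1 else - r1) /\
                       x r2 = (if b2 then r2 else - r2).
Proof.
move=> hc b1 b2.
have r10 := sq_nz _ _ ha1 hr1; have r20 := sq_nz _ _ ha2 hr2.
pose phi (x : gal_of E) := (x r1 == r1, x r2 == r2).
have injphi : injective phi.
  move=> x y [e1 e2]; apply: eqE.
    exact: (same_sign x y r1 a1 hr1 r10 e1).
  exact: (same_sign x y r2 a2 hr2 r20 e2).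
have hcard : (#|{: bool * bool}| <= #|{: gal_of E}|)%N.
  by rewrite card_prod card_bool (_ : (2 * 2 = 4)%N) // -hc max_card.
have /codomP[x hx] := @inj_card_onto _ _ phi injphi hcard (b1, b2).
exists x; move: hx; rewrite /phi => -[e1 e2].
have nr (r : L) : r != 0 -> (- r == r) = false.
  by move=> r0; rewrite eq_sym; apply/negbTE/neqN.
split.
  case: b1 e1 => /esym/eqP // h; case: (sign x _ _ hr1) => // h'; by rewrite h' eqxx in h.
case: b2 e2 => /esym/eqP // h; case: (sign x _ _ hr2) => // h'; by rewrite h' eqxx in h.
Qed.

Lemma normQ (r : L) (a : F) (f : 'AEnd(L)) : a != 0 -> r ^+ 2 = a%:A ->
  f r = - r -> forall y, y \in <<1; r>>%AS ->
  galNorm 1 <<1; r>>%AS y = y * f y.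
Proof.
move=> ha hr fr y Ky.
have r0 := sq_nz _ _ ha hr.
set K := (<<1; r>>%AS : {subfield L}).
have rK : r \in K by exact: memv_adjoin.
have oneK : (1%VS <= K)%VS by exact: sub1v.
have sub : (f @: K <= K)%VS.
  apply/subvP => _ /memv_imgP[u Ku ->].
  have [s [t [hs ht ->]]] := coord1 _ _ _ hr Ku.
  rewrite aend_coord // fr.
  by rewrite rpredD ?rpredM ?rpredN // (subvP oneK).
set g := gal K f.
have gf := galK sub; rewrite -/g in gf.
have gr : g r = - r by rewrite gf.
have h1or (h : gal_of K) : h = 1%g \/ h = g.
  case: (sign h _ _ hr) => hh; [left|right]; apply/eqP/gal_eqP => u Ku;
    have [s [t [hs ht ->]]] := coord1 _ _ _ hr Ku;
    rewrite !aend_coord // hh ?gal_id ?gr //.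
have g1 : g != 1%g.
  apply/eqP => e; have := neqN _ r0.
  by rewrite -{1}gr e gal_id eqxx.
rewrite /galNorm (bigD1 1%g) ?group1 //= (bigD1 g) /=; last first.
  by rewrite g1 andbT gal_all.
rewrite big1 ?mulr1 ?gal_id ?gf //.
by move=> h /andP[/andP[_ n1] ng]; case: (h1or h) => e; rewrite e eqxx ?andbF in n1 ng.
Qed.

Lemma normE3 (tau : gal_of E) : tau r1 = - r1 -> tau r2 = - r2 ->
  forall y, galNorm E3 E y = y * tau y.
Proof.
move=> t1 t2 y.
have r10 := sq_nz _ _ ha1 hr1; have r20 := sq_nz _ _ ha2 hr2.
have r120 : r1 * r2 != 0 by rewrite mulf_neq0.
have h12 : (r1 * r2) ^+ 2 = (a1 * a2)%:A.
  by rewrite exprMn hr1 hr2 mulr_algl scalerA.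
have tin : (tau \in 'Gal(E / E3))%g.
  rewrite gal_kHom ?E3E //; apply/kAHomP => u Ku.
  have [s [t [hs ht ->]]] := coord1 _ _ _ h12 Ku.
  by rewrite aend_coord // rmorphM /= t1 t2 mulrNN.
have hor (g : gal_of E) : (g \in 'Gal(E / E3))%g -> g = 1%g \/ g = tau.
  move=> gin.
  have g12 : g (r1 * r2) = r1 * r2 by rewrite (fixed_gal E3E gin) ?memv_adjoin.
  move: g12; rewrite rmorphM /=.
  case: (sign g _ _ hr1) => h1; case: (sign g _ _ hr2) => h2; rewrite h1 h2 => e.
  - by left; apply: eqE; rewrite gal_id.
  - by have := neqN _ r120; rewrite -{1}e mulrN eqxx.
  - by have := neqN _ r120; rewrite -{1}e mulNr eqxx.
  - by right; apply: eqE; rewrite ?h1 ?h2.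
have g1 : tau != 1%g.
  apply/eqP => e; have := neqN _ r10.
  by rewrite -{1}t1 e gal_id eqxx.
rewrite /galNorm (bigD1 1%g) ?group1 //= (bigD1 tau) /=; last first.
  by rewrite g1 andbT.
rewrite big1 ?mulr1 ?gal_id //.
move=> h /andP[/andP[hin n1] ng]; case: (hor h hin) => e; by rewrite e eqxx ?andbF in n1 ng.
Qed.
End S.

Theorem mainTheorem6 (F : fieldType) (L : splittingFieldType F)
  (a1 a2 : F) (r1 r2 : L) :
  (2 \notin [pchar F])%N ->
  a1 != 0 -> a2 != 0 ->
  r1 ^+ 2 = a1%:A -> r2 ^+ 2 = a2%:A ->
  let E  : {subfield L} := <<<<1; r1>>; r2>>%AS in
  let E1 : {subfield L} := <<1; r1>>%AS in
  let E2 : {subfield L} := <<1; r2>>%AS in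
  let E3 : {subfield L} := <<1; r1 * r2>>%AS in
  galois 1 E ->
  ('Gal(E / 1%AS) \isog [set: 'Z_2 * 'Z_2])%g ->
  forall z : L,
    [/\ (exists2 x : L, (x \in E) && (x != 0) & galNorm E3 E x = z),
         z \in 1%VS & z != 0] <->
    (exists y1 y2 : L, [/\ y1 \in E1, y1 != 0, y2 \in E2, y2 != 0 &
                        z = galNorm 1 E1 y1 * galNorm 1 E2 y2]).
Proof.
move=> h2F ha1 ha2 hr1 hr2 E E1 E2 E3 galE isoG z.
have two : (2%:R : L) != 0.
  have h2 : (2%:R : F) != 0 by move: h2F; rewrite inE /=.
  by rewrite -scaler_nat scaler_eq0 oner_eq0 orbF.
have hc : #|('Gal(E / 1%AS))%g| = 4%N by rewrite (card_isog isoG) card4.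
have [tau [t1 t2]] := exists_sign _ _ _ _ _ _ two ha1 ha2 hr1 hr2 hc false false.
have [sig [s1 s2]] := exists_sign _ _ _ _ _ _ two ha1 ha2 hr1 hr2 hc true false.
simpl in t1, t2, s1, s2.
have r10 := sq_nz _ _ _ _ ha1 hr1; have r20 := sq_nz _ _ _ _ ha2 hr2.
have N3 := normE3 _ _ _ _ _ _ two ha1 ha2 hr1 hr2 tau t1 t2.
have N1 := normQ _ _ two _ _ (gal_repr tau) ha1 hr1 t1.
have N2 := normQ _ _ two _ _ (gal_repr tau) ha2 hr2 t2.
have oneE1 : (1%VS <= E1)%VS by exact: sub1v.
have r1E1 : r1 \in E1 by exact: memv_adjoin.
have r2E2 : r2 \in E2 by exact: memv_adjoin.
have conj1 (y : L) : y \in E1 -> exists s t, [/\ s \in 1%VS, t \in 1%VS,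
    y = s + t * r1 & tau y = s - t * r1].
  move=> /(coord1 _ _ _ _ _ hr1)[s [t [hs ht ->]]]; exists s, t; split => //.
  by rewrite aend_coord // t1 mulrN.
have tauE1 (y : L) : y \in E1 -> tau y \in E1.
  move=> /conj1[s [t [hs ht _ ->]]].
  by rewrite rpredB ?rpredM //; apply: (subvP oneE1).
have r2nE1 : r2 \notin E1.
  apply/negP => /(coord1 _ _ _ _ _ hr1)[s [t [hs ht e]]].
  have h := congr1 (gal_repr sig) e.
  rewrite /= aend_coord // s1 -e s2 in h.
  by have := neqN _ _ two _ r20; rewrite h eqxx.
have normin (r : L) (a : F) (y : L) : r ^+ 2 = a%:A -> tau r = - r ->
    y \in <<1; r>>%VS -> y * tau y \in 1%VS.
  move=> hr tr /(coord1 _ _ _ _ _ hr)[s [t [hs ht ->]]].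
  rewrite aend_coord // tr.
  have -> : (s + t * r) * (s + t * - r) = s * s - t * t * r ^+ 2 by ring.
  by rewrite hr rpredB ?rpredM // rpredZ ?mem1v.
split.
  case=> [[v /andP[Ev v0] Nv] z1 z0].
  have Nv' : z = v * tau v by rewrite -Nv; exact: N3.
  have a2E1 : a2%:A \in E1 by rewrite rpredZ // mem1v.
  have z1E1 : z \in E1 := subvP oneE1 _ z1.
  have [p [q [Ep Eq ev]]] := coord _ _ E1 r2 (a2%:A) v a2E1 hr2 Ev.
  have tv : tau v = tau p - tau q * r2 by rewrite ev rmorphD rmorphM /= t2 mulrN.
  have ez : z = (p * tau p - q * tau q * a2%:A) + (q * tau p - p * tau q) * r2.
    by rewrite Nv' tv ev -hr2; ring.
  have k0 : q * tau p - p * tau q = 0.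
    apply/eqP/negPn/negP => nk; apply: (negP r2nE1).
    have -> : r2 = (z - (p * tau p - q * tau q * a2%:A)) / (q * tau p - p * tau q).
      by rewrite ez [_ + _ * r2]addrC addrK mulrAC divff // mul1r.
    have tpE := tauE1 _ Ep; have tqE := tauE1 _ Eq.
    by rewrite rpredM ?rpredV ?rpredB ?rpredM.
  case: (eqVneq p 0) => p0.
    exists q, r2; split => //.
      by apply: contraNneq v0 => q0; rewrite ev p0 q0 mul0r addr0.
    rewrite (N1 _ Eq) (N2 _ r2E2) Nv' ev p0 add0r rmorphM /=; ring.
  set w := q / p.
  have Pp : tau p != 0 by rewrite fmorph_eq0.
  have tw : tau w = w.
    rewrite /w fmorph_div /=; apply/eqP; rewrite eqr_div //; apply/eqP.
    move/eqP: k0; rewrite subr_eq0 => /eqP ->; ring.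
  have wE1 : w \in E1 by rewrite rpredM ?rpredV.
  have w1 : w \in 1%VS.
    have [s [t [hs ht ew ew']]] := conj1 w wE1.
    have e2 : (2%:R : L) * (t * r1) = 0.
      by rewrite -[RHS](subrr w) {1}ew -tw ew'; ring.
    move/eqP: e2; rewrite mulf_eq0 (negPf two) /= mulf_eq0 (negPf r10) orbF.
    by move/eqP => t0; rewrite ew t0 mul0r addr0.
  have ev2 : v = p * (1 + w * r2).
    by rewrite ev mulrDr mulr1 mulrA [p * _]mulrC divfK.
  have y2E2 : 1 + w * r2 \in E2.
    by rewrite rpredD ?mem1v // rpredM // (subvP (sub1v _)).
  exists p, (1 + w * r2); split => //.
    by apply: contraNneq v0 => y0; rewrite ev2 y0 mulr0.
  rewrite (N1 _ Ep) (N2 _ y2E2) Nv' ev2 rmorphM /=; ring.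
case=> y1 [y2 [Ey1 y10 Ey2 y20 ->]].
rewrite (N1 _ Ey1) (N2 _ Ey2).
split.
- exists (y1 * y2).
    rewrite mulf_neq0 // andbT rpredM //.
      exact: (subvP (E1E _ _ r1 r2)).
    exact: (subvP (E2E _ _ r1 r2)).
  transitivity ((y1 * y2) * tau (y1 * y2)); first exact: N3.
  rewrite rmorphM /=; ring.
- by apply: rpredM; [apply: (normin _ _ _ hr1 t1) | apply: (normin _ _ _ hr2 t2)].
- by rewrite !mulf_neq0 // fmorph_eq0.
Qed.
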